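(* Let $f_1,f_2,\dots$ be frog model statistics with values in $[0,\infty]$ and let $f=\sum_{i=1}^\infty f_i$. If all $f_i$ are icv statistics, then $f$ is an icv statistic; if all $f_i$ are pgf statistics, then $f$ is a pgf statistic.
   Context: Frog model: $G$ countable with root $\emptyset$; $(\eta,S)$ consists of counts $\eta(v)\in\{0,1,\dots\}$ for $v\ne\emptyset$ and paths $S_\cdot(v,i)$ with $S_0(v,i)=v$; one active frog starts at $\emptyset$; sleeping frogs activate when an active frog visits their vertex, then follow their paths. $\sigma_{P_\cdot}(\eta,S)$: add an extra frog with path $P_\cdot$ at $P_0$ (nonroot). $\Delta_{P_\cdot}f(\eta,S)=f(\sigma_{P_\cdot}(\eta,S))-f(\eta,S)$. $f$ is an icv statistic if for all $(\eta,S)$ and paths $P^1_\cdot,\dots,P^m_\cdot$ with a common start: (i) for $m=1,2$, $(-1)^m\Delta_{P^1_\cdot}\cdots\Delta_{P^m_\cdot}f(\eta,S)\le0$ whenever all values $f(\sigma_{P^{u_1}_\cdot}\cdots\sigma_{P^{u_j}_\cdot}(\eta,S))$, $\{u_1,\dots,u_j\}\subseteq\{1,\dots,m\}$, are finite; (ii) $f(\eta,S)=\infty\Rightarrow f(\sigma_{P^1_\cdot}(\eta,S))=\infty$; (iii) $f(\sigma_{P^1_\cdot}\sigma_{P^2_\cdot}(\eta,S))=\infty\Rightarrow f(\sigma_{P^i_\cdot}(\eta,S))=\infty$ for $i=1$ or $2$. $f$ is a pgf statistic if (ii),(iii) hold and (i) holds for all $m\ge1$. *)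

(* Defs.v *)
From HB Require Import structures.
From mathcomp Require Import all_boot all_order all_algebra.
From mathcomp Require Import all_classical all_reals all_analysis.
Set Implicit Arguments. Unset Strict Implicit. Unset Printing Implicit Defensive.
Import Order.TTheory GRing.Theory Num.Theory.

(* A frog model configuration (eta, S) on a countable vertex set V.
   eta v = number of sleeping frogs at v; paths v i = path S_.(v,i) of the
   i-th frog at v (frogs at v are indexed 0, ..., eta v - 1). *)
Record config (V : Type) := Config {
  eta : V -> nat;
  paths : V -> nat -> (nat -> V) }.

(* Well-formed configuration: no sleeping frogs at the root (the root carries
   the single initially active frog), and S_0(v,i) = v. *)
Definition valid_config (V : eqType) (root : V) (x : config V) : Prop :=
  eta x root = 0%N /\ forall v i, paths x v i 0%N = v.

(* sigma_P : add one extra sleeping frog with path P at vertex P 0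
   (it receives the next free index eta (P 0)). *)
Definition sigma (V : eqType) (P : nat -> V) (x : config V) : config V :=
  Config (fun v => if v == P 0%N then (eta x v).+1 else eta x v)
         (fun v i => if (v == P 0%N) && (i == eta x v) then P else paths x v i).

(* Iterated difference operator:
   iterD [:: P1; ...; Pm] f x = Delta_{P1} ... Delta_{Pm} f (x),
   computed with real values (only used when all terms are finite). *)
Fixpoint iterD (R : realType) (V : eqType) (Ps : seq (nat -> V))
    (f : config V -> \bar R) (x : config V) : R :=
  match Ps with
  | [::] => fine (f x)
  | P :: Ps' => (iterD Ps' f (sigma P x) - iterD Ps' f x)%R
  end.

Fixpoint all_finite (R : realType) (V : eqType) (Ps : seq (nat -> V))
    (f : config V -> \bar R) (x : config V) : Prop :=
  match Ps with
  | [::] => f x \is a fin_num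
  | P :: Ps' => all_finite Ps' f (sigma P x) /\ all_finite Ps' f x
  end.

Definition cond_i (R : realType) (V : eqType) (root : V)
    (f : config V -> \bar R) (m : nat) : Prop :=
  forall (x : config V) (v : V) (Ps : seq (nat -> V)),
    valid_config root x -> v != root -> size Ps = m ->
    (forall P, P \in Ps -> P 0%N = v) ->
    all_finite Ps f x ->
    ((-1) ^+ m * iterD Ps f x <= 0)%R.

Definition cond_ii (R : realType) (V : eqType) (root : V)
    (f : config V -> \bar R) : Prop :=
  forall (x : config V) (P : nat -> V),
    valid_config root x -> P 0%N != root ->
    f x = +oo%E -> f (sigma P x) = +oo%E.

Definition cond_iii (R : realType) (V : eqType) (root : V)
    (f : config V -> \bar R) : Prop :=
  forall (x : config V) (P1 P2 : nat -> V),
    valid_config root x -> P1 0%N != root -> P1 0%N = P2 0%N ->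
    f (sigma P1 (sigma P2 x)) = +oo%E ->
    f (sigma P1 x) = +oo%E \/ f (sigma P2 x) = +oo%E.

Definition icv (R : realType) (V : eqType) (root : V)
    (f : config V -> \bar R) : Prop :=
  cond_i root f 1 /\ cond_i root f 2 /\ cond_ii root f /\ cond_iii root f.

Definition pgf (R : realType) (V : eqType) (root : V)
    (f : config V -> \bar R) : Prop :=
  (forall m, (1 <= m)%N -> cond_i root f m) /\ cond_ii root f /\ cond_iii root f.

(* Main.v *)
Require Import Defs.
From HB Require Import structures.
From mathcomp Require Import all_boot all_order all_algebra.
From mathcomp Require Import all_classical all_reals all_analysis.
From mathcomp Require Import lra.
Import Order.TTheory GRing.Theory Num.Theory.
Import numFieldNormedType.Exports.
Local Open Scope classical_set_scope.
Local Open Scope ring_scope.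
Local Open Scope ereal_scope.

Section S.
Variables (R : realType) (V : countType) (root : V) (F : nat -> config V -> \bar R).
Hypothesis F_ge0 : forall (i : nat) (x : config V), 0 <= F i x.

Definition G (n : nat) (y : config V) := \sum_(0 <= i < n) F i y.
Definition Fs (y : config V) := \sum_(i <oo) F i y.

Lemma Fs_ge0 y : 0 <= Fs y.
Proof. by apply: nneseries_ge0 => n _ _; exact: F_ge0. Qed.

Lemma F_le_Fs i y : F i y <= Fs y.
Proof.
apply: (le_trans _ (@nneseries_lim_ge R (F^~ y) xpredT 0%N i.+1 (fun n _ _ => F_ge0 n y))).
rewrite big_nat_recr //= leeDr //.
by apply: sume_ge0 => j _; exact: F_ge0.
Qed.

Lemma F_fin i y : Fs y \is a fin_num -> F i y \is a fin_num.
Proof.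
move=> h; rewrite ge0_fin_numE //; apply: le_lt_trans (F_le_Fs i y) _.
by rewrite -ge0_fin_numE // Fs_ge0.
Qed.

Lemma G_fine n y : Fs y \is a fin_num ->
  fine (G n y) = (\sum_(0 <= i < n) fine (F i y))%R.
Proof.
move=> h; elim: n => [|n IH]; first by rewrite /G !big_geq.
rewrite /G !big_nat_recr //= fineD ?IH //; last exact: F_fin.
by rewrite sum_fin_num; apply/allP => z /mapP[j _ ->]; exact: F_fin.
Qed.

Lemma G_cvg y : Fs y \is a fin_num ->
  (fun n => fine (G n y)) @ \oo --> fine (Fs y).
Proof.
move=> h.
have c : G ^~ y @ \oo --> Fs y.
  by apply: (@is_cvg_nneseries R (F^~ y) xpredT 0%N) => n _ _; exact: F_ge0.
have : G ^~ y @ \oo --> (fine (Fs y))%:E by rewrite fineK.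
exact: fine_cvg.
Qed.

Lemma all_finite_F Ps x i : all_finite Ps Fs x -> all_finite Ps (F i) x.
Proof.
elim: Ps x => [|P Ps IH] x /=; first exact: F_fin.
by case=> h1 h2; split; apply: IH.
Qed.

Lemma iterD_G Ps x n : all_finite Ps Fs x ->
  Defs.iterD Ps (G n) x = (\sum_(0 <= i < n) Defs.iterD Ps (F i) x)%R.
Proof.
elim: Ps x => [|P Ps IH] x /=; first exact: G_fine.
by case=> h1 h2; rewrite IH // IH // -sumrB.
Qed.

Lemma iterD_cvg Ps x : all_finite Ps Fs x ->
  (fun n => Defs.iterD Ps (G n) x) @ \oo --> Defs.iterD Ps Fs x.
Proof.
elim: Ps x => [|P Ps IH] x /=; first exact: G_cvg.
by case=> h1 h2; apply: cvgB; [exact: IH|exact: IH].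
Qed.

Lemma sum_cond_i m : (forall i, cond_i root (F i) m) -> cond_i root Fs m.
Proof.
move=> Hi x v Ps vx vr sz P0 fin.
have c := iterD_cvg Ps x fin.
have c' : (fun n => ((-1) ^+ m * Defs.iterD Ps (G n) x)%R) @ \oo -->
   ((-1) ^+ m * Defs.iterD Ps Fs x)%R by apply: cvgMr.
apply: (cvgr_to_le c'); apply: nearW => n.
rewrite iterD_G // mulr_sumr; apply: sumr_le0 => i _.
exact: (Hi i x v Ps vx vr sz P0 (all_finite_F Ps x i fin)).
Qed.

Lemma mono (f : config V -> \bar R) (f0 : forall y, 0 <= f y) x P :
  cond_i root f 1 -> cond_ii root f -> valid_config root x -> P 0%N != root ->
  f x <= f (sigma P x).
Proof.
move=> h1 h2 vx Pr.
have [fx|fx] := eqVneq (f x) +oo; first by rewrite (h2 x P) ?leey.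
have [fs|fs] := eqVneq (f (sigma P x)) +oo; first by rewrite fs leey.
have fxf : f x \is a fin_num by rewrite ge0_fin_numE // ltey.
have fsf : f (sigma P x) \is a fin_num by rewrite ge0_fin_numE // ltey.
have H : ((-1) ^+ 1 * Defs.iterD [:: P] f x <= 0)%R.
  apply: (h1 x (P 0%N) [:: P] vx Pr erefl); last by split.
  by move=> Q; rewrite inE => /eqP ->.
rewrite /= expr1 mulN1r oppr_le0 subr_ge0 in H.
by rewrite -(fineK fxf) -(fineK fsf) lee_fin.
Qed.

Lemma sum_cond_ii : (forall i, cond_i root (F i) 1) ->
  (forall i, cond_ii root (F i)) -> cond_ii root Fs.
Proof.
move=> h1 h2 x P vx Pr fx; apply/eqP; rewrite eq_le leey /= -fx.
apply: lee_nneseries => [i _ _|i _]; first exact: F_ge0.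
exact: mono.
Qed.

Lemma sub2 (f : config V -> \bar R) (f0 : forall y, 0 <= f y) x P1 P2 :
  cond_i root f 1 -> cond_i root f 2 -> cond_ii root f -> cond_iii root f ->
  valid_config root x -> P1 0%N != root -> P1 0%N = P2 0%N ->
  f (sigma P1 (sigma P2 x)) <= f (sigma P1 x) + f (sigma P2 x).
Proof.
move=> h1 h2 h3 h4 vx Pr P12.
have ninf y : f y != -oo by apply/eqP => h; move: (f0 y); rewrite h.
have [f1|f1] := eqVneq (f (sigma P1 x)) +oo.
  by rewrite f1 addye ?leey.
have [f2|f2] := eqVneq (f (sigma P2 x)) +oo.
  by rewrite f2 addey ?leey.
have f1f : f (sigma P1 x) \is a fin_num by rewrite ge0_fin_numE // ltey.
have f2f : f (sigma P2 x) \is a fin_num by rewrite ge0_fin_numE // ltey.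
have fxf : f x \is a fin_num.
  rewrite ge0_fin_numE //; apply: (le_lt_trans (@mono f f0 x P1 h1 h3 vx Pr)).
  by rewrite ltey.
have f12f : f (sigma P1 (sigma P2 x)) \is a fin_num.
  rewrite ge0_fin_numE // ltey; apply/eqP => /(h4 x P1 P2 vx Pr P12).
  by case=> /eqP; [rewrite (negPf f1)|rewrite (negPf f2)].
have H : ((-1) ^+ 2 * Defs.iterD [:: P2; P1] f x <= 0)%R.
  apply: (h2 x (P1 0%N) [:: P2; P1] vx Pr erefl); last by split; split.
  by move=> Q; rewrite !inE => /orP[] /eqP ->.
rewrite /= expr2 mulrNN mul1r in H.
rewrite -(fineK f1f) -(fineK f2f) -(fineK f12f) -EFinD lee_fin.
have := fine_ge0 (f0 x).
move: H; lra.
Qed.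

Lemma sum_cond_iii : (forall i, cond_i root (F i) 1) ->
  (forall i, cond_i root (F i) 2) -> (forall i, cond_ii root (F i)) ->
  (forall i, cond_iii root (F i)) -> cond_iii root Fs.
Proof.
move=> h1 h2 h3 h4 x P1 P2 vx Pr P12 h.
have le : Fs (sigma P1 (sigma P2 x)) <= Fs (sigma P1 x) + Fs (sigma P2 x).
  rewrite /Fs -nneseriesD; last by move=> *; exact: F_ge0.
    apply: lee_nneseries => [i _ _|i _]; first exact: F_ge0.
    exact: sub2.
  by move=> *; exact: F_ge0.
have [f1|f1] := eqVneq (Fs (sigma P1 x)) +oo; first by left.
have [f2|f2] := eqVneq (Fs (sigma P2 x)) +oo; first by right.
exfalso; move: le; rewrite h leye_eq => /eqP.
have ninf y : Fs y != -oo by apply/eqP => e; move: (Fs_ge0 y); rewrite e.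
move=> e; have : Fs (sigma P1 x) + Fs (sigma P2 x) < +oo.
  by apply: lte_add_pinfty; rewrite ltey.
by rewrite -e ltxx.
Qed.

End S.

Theorem lemma20 (R : realType) (V : countType) (root : V)
    (F : nat -> config V -> \bar R)
    (F_ge0 : forall (i : nat) (x : config V), 0 <= F i x) :
  ((forall i : nat, icv root (F i)) ->
     icv root (fun x : config V => \sum_(i <oo) F i x)) /\
  ((forall i : nat, pgf root (F i)) ->
     pgf root (fun x : config V => \sum_(i <oo) F i x)).
Proof.
split.
- move=> H.
  have h1 i := (H i).1; have h2 i := (H i).2.1.
  have h3 i := (H i).2.2.1; have h4 i := (H i).2.2.2.
  split; first exact: (@sum_cond_i R V root F F_ge0).
  split; first exact: (@sum_cond_i R V root F F_ge0).
  split; first exact: (@sum_cond_ii R V root F F_ge0).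
  exact: (@sum_cond_iii R V root F F_ge0).
- move=> H.
  have hi i m : (1 <= m)%N -> cond_i root (F i) m by move=> hm; exact: (H i).1 m hm.
  have h3 i := (H i).2.1; have h4 i := (H i).2.2.
  split; first by move=> m hm; apply: (@sum_cond_i R V root F F_ge0) => i; exact: hi.
  split; first by apply: (@sum_cond_ii R V root F F_ge0) => // i; exact: (hi i 1%N).
  apply: (@sum_cond_iii R V root F F_ge0) => // i.
    exact: (hi i 1%N).
  exact: (hi i 2%N).
Qed.
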